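(* Let $(A,\star)$ be a permutative algebra and $(B,\bullet,\{\cdot,\cdot\})$ a Poisson algebra. Define bilinear operations on $A\otimes B$ by $$(x\otimes a)\circ_{A\otimes B}(y\otimes b)=(x\star y)\otimes(a\bullet b),\qquad [x\otimes a,y\otimes b]_{A\otimes B}=(x\star y)\otimes\{a,b\},$$ for $x,y\in A$, $a,b\in B$. Then $(A\otimes B,\circ_{A\otimes B},[\cdot,\cdot]_{A\otimes B})$ is a dual pre-Poisson algebra.
   Context: Field $\mathbb{F}$ of characteristic $0$. A permutative algebra: $x\star(y\star z)=(x\star y)\star z=(y\star x)\star z$. A Poisson algebra $(B,\bullet,\{\cdot,\cdot\})$: $(B,\bullet)$ commutative associative, $(B,\{\cdot,\cdot\})$ a Lie algebra, and $\{x,y\bullet z\}=\{x,y\}\bullet z+y\bullet\{x,z\}$. A dual pre-Poisson algebra is a vector space with bilinear operations $\circ,[\cdot,\cdot]$ satisfying: $x\circ(y\circ z)=(x\circ y)\circ z=(y\circ x)\circ z$; $[x,[y,z]]=[[x,y],z]+[y,[x,z]]$; $[x,y\circ z]=[x,y]\circ z+y\circ[x,z]$; $[x\circ y,z]=x\circ[y,z]+y\circ[x,z]$; $[x,y]\circ z=-[y,x]\circ z$. *)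

(* Defs.v *)
From HB Require Import structures.
From mathcomp Require Import all_boot all_order all_algebra.
Set Implicit Arguments. Unset Strict Implicit. Unset Printing Implicit Defensive.
Import Order.TTheory GRing.Theory Num.Theory.
Local Open Scope ring_scope.

Section Defs.
Variable F : fieldType.

Definition bilin (U V W : lmodType F) (f : U -> V -> W) : Prop :=
  (forall (c : F) (x y : U) (z : V), f (c *: x + y) z = c *: f x z + f y z) /\
  (forall (c : F) (x : U) (y z : V), f x (c *: y + z) = c *: f x y + f x z).

Definition permutative_algebra (A : lmodType F) (star : A -> A -> A) : Prop :=
  bilin star /\
  (forall x y z, star x (star y z) = star (star x y) z) /\
  (forall x y z, star (star x y) z = star (star y x) z).

Definition poisson_algebra (B : lmodType F) (mul br : B -> B -> B) : Prop :=
  bilin mul /\ bilin br /\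
  (forall a b, mul a b = mul b a) /\
  (forall a b c, mul a (mul b c) = mul (mul a b) c) /\
  (forall a, br a a = 0) /\
  (forall a b c, br a (br b c) + br b (br c a) + br c (br a b) = 0) /\
  (forall x y z, br x (mul y z) = mul (br x y) z + mul y (br x z)).

Definition dual_pre_poisson (T : Type) (eqv : T -> T -> Prop)
  (add : T -> T -> T) (neg : T -> T) (circ br : T -> T -> T) : Prop :=
  (forall x y z, eqv (circ x (circ y z)) (circ (circ x y) z)) /\
  (forall x y z, eqv (circ (circ x y) z) (circ (circ y x) z)) /\
  (forall x y z, eqv (br x (br y z)) (add (br (br x y) z) (br y (br x z)))) /\
  (forall x y z, eqv (br x (circ y z)) (add (circ (br x y) z) (circ y (br x z)))) /\
  (forall x y z, eqv (br (circ x y) z) (add (circ x (br y z)) (circ y (br x z)))) /\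
  (forall x y z, eqv (circ (br x y) z) (neg (circ (br y x) z))).

(* ---- Tensor product A (x) B ----
   An element of A (x) B is represented by a finite formal sum
   sum_i x_i (x) a_i, i.e. a list of pairs.
   Two formal sums are equal in A (x) B iff every bilinear map
   phi : A -> B -> W (into any F-vector space W) takes the same value on
   them (universal property of the tensor product). *)
Section Tensor.
Variables A B : lmodType F.

Definition tensor := seq (A * B).

Definition tsum (W : lmodType F) (phi : A -> B -> W) (u : tensor) : W :=
  \sum_(p <- u) phi p.1 p.2.

Definition tensor_eq (u v : tensor) : Prop :=
  forall (W : lmodType F) (phi : A -> B -> W), bilin phi -> tsum phi u = tsum phi v.

Definition tadd (u v : tensor) : tensor := u ++ v.
Definition tneg (u : tensor) : tensor := [seq (- p.1, p.2) | p <- u].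

(* bilinear extension of (x (x) a, y (x) b) |-> (opA x y) (x) (opB a b) *)
Definition tensor_op (opA : A -> A -> A) (opB : B -> B -> B) (u v : tensor) : tensor :=
  [seq (opA p.1 q.1, opB p.2 q.2) | p <- u, q <- v].

Definition tensor_compat (op : tensor -> tensor -> tensor) : Prop :=
  forall u u' v v', tensor_eq u u' -> tensor_eq v v' -> tensor_eq (op u v) (op u' v').
End Tensor.
End Defs.

(* Main.v *)
Require Import Defs.
From mathcomp Require Import all_boot all_order all_algebra.
Local Open Scope ring_scope.
Set Implicit Arguments. Unset Strict Implicit.
Import GRing.Theory.

Section H.
Variable F : fieldType.

Lemma blD1 (U V W : lmodType F) (f : U -> V -> W) : bilin f ->
  forall x y z, f (x + y) z = f x z + f y z.
Proof. by move=> hf; case: hf => h _ x y z; rewrite -(scale1r x) h !scale1r. Qed.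
Lemma blD2 (U V W : lmodType F) (f : U -> V -> W) : bilin f ->
  forall x y z, f x (y + z) = f x y + f x z.
Proof. by move=> hf; case: hf => _ h x y z; rewrite -(scale1r y) h !scale1r. Qed.
Lemma blN1 (U V W : lmodType F) (f : U -> V -> W) : bilin f ->
  forall x z, f (- x) z = - f x z.
Proof.
move=> hf x z. have h0 : f 0 z = 0.
  have := blD1 hf 0 0 z; rewrite addr0 => /(congr1 (fun t => t - f 0 z)); rewrite addrK subrr => <-; done.
by rewrite -[LHS]addr0 -(subrr (f x z)) addrA -(blD1 hf) ?addNr ?addrN h0 add0r.
Qed.
Lemma blN2 (U V W : lmodType F) (f : U -> V -> W) : bilin f ->
  forall x z, f x (- z) = - f x z.
Proof.
move=> hf x z. have h0 : f x 0 = 0.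
  have := blD2 hf x 0 0; rewrite addr0 => /(congr1 (fun t => t - f x 0)); rewrite addrK subrr => <-; done.
by rewrite -[LHS]addr0 -(subrr (f x z)) addrA -(blD2 hf) ?addNr ?addrN h0 add0r.
Qed.

Lemma sum_op (A B : lmodType F) (W : nmodType) (opA : A -> A -> A) (opB : B -> B -> B)
  (u v : tensor A B) (K : A * B -> W) :
  \sum_(s <- tensor_op opA opB u v) K s =
  \sum_(p <- u) \sum_(q <- v) K (opA p.1 q.1, opB p.2 q.2).
Proof.
rewrite /tensor_op; elim: u => [|p u IH]; first by rewrite !big_nil.
by rewrite /= big_cat IH big_cons big_map.
Qed.

Lemma sum_op2 (A B : lmodType F) (W : nmodType) (opA opA' : A -> A -> A) (opB opB' : B -> B -> B)
  (u v w : tensor A B) (K : A * B -> W) :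
  \sum_(s <- tensor_op opA opB u (tensor_op opA' opB' v w)) K s =
  \sum_(p <- u) \sum_(q <- v) \sum_(r <- w) K (opA p.1 (opA' q.1 r.1), opB p.2 (opB' q.2 r.2)).
Proof.
rewrite sum_op; apply: eq_bigr => p _; by rewrite sum_op.
Qed.

Lemma compat_op (A B : lmodType F) (opA : A -> A -> A) (opB : B -> B -> B) :
  bilin opA -> bilin opB -> tensor_compat (tensor_op opA opB).
Proof.
move=> hA hB u u' v v' Hu Hv W phi Hphi; rewrite /tsum !sum_op /=.
transitivity (\sum_(p <- u') \sum_(q <- v) phi (opA p.1 q.1) (opB p.2 q.2)).
  rewrite exchange_big [RHS]exchange_big; apply: eq_bigr => q _.
  have := Hu W (fun x a => phi (opA x q.1) (opB a q.2)); rewrite /tsum; apply.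
  split=> c x y z /=.
    by rewrite (proj1 hA) (proj1 Hphi).
  by rewrite (proj1 hB) (proj2 Hphi).
apply: eq_bigr => p _.
have := Hv W (fun y b => phi (opA p.1 y) (opB p.2 b)); rewrite /tsum; apply.
split=> c x y z /=.
  by rewrite (proj2 hA) (proj1 Hphi).
by rewrite (proj2 hB) (proj2 Hphi).
Qed.
End H.

Theorem proposition2p12 (F : fieldType) (charF0 : [pchar F] =i pred0)
  (A B : lmodType F) (star : A -> A -> A) (mul br : B -> B -> B) :
  permutative_algebra star -> poisson_algebra mul br ->
  let circ := tensor_op star mul in
  let brT := tensor_op star br in
  [/\ tensor_compat circ, tensor_compat brT
    & dual_pre_poisson (@tensor_eq F A B) (@tadd F A B) (@tneg F A B) circ brT].
Proof.
move=> hP hPo circ brT.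
move: hP; rewrite /permutative_algebra => -[hs [sA sC]].
move: hPo; rewrite /poisson_algebra => -[hm [hb [mC [mA [bAA [jac leib]]]]]].
have anti : forall a b, br a b = - br b a.
  move=> a b; apply/eqP; rewrite -subr_eq0 opprK.
  have := bAA (a + b); rewrite (blD1 hb) !(blD2 hb) !bAA add0r addr0 => ->.
  by [].
split; [exact: compat_op | exact: compat_op |].
have tsN : forall (W : lmodType F) (phi : A -> B -> W), bilin phi ->
   forall u, tsum phi (tneg u) = - tsum phi u.
  move=> W phi Hphi u; rewrite /tsum /tneg big_map -sumrN.
  by apply: eq_bigr => p _ /=; rewrite (blN1 Hphi).
have jac' : forall a b c, br a (br b c) = br (br a b) c + br b (br a c).
  move=> a b c; have := jac a b c.
  rewrite (anti c a) (blN2 hb) (anti c (br a b)).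
  move/eqP; rewrite -addrA -opprD subr_eq0 => /eqP ->; by rewrite addrC.
have leib2 : forall a b c, br (mul a b) c = mul a (br b c) + mul b (br a c).
  move=> a b c; rewrite (anti (mul a b) c) leib (anti c a) (anti c b) (blN1 hm) (blN2 hm).
  by rewrite opprD !opprK addrC (mC (br a c) b).
split.
- move=> x y z W phi Hphi; rewrite /tsum /circ ?sum_op2 !sum_op.
  apply: eq_bigr => p _; apply: eq_bigr => q _; apply: eq_bigr => r _ /=.
  by rewrite sA mA.
split.
- move=> x y z W phi Hphi; rewrite /tsum /circ ?sum_op2 !sum_op.
  rewrite [RHS]exchange_big.
  apply: eq_bigr => p _; apply: eq_bigr => q _; apply: eq_bigr => r _ /=.
  by rewrite (sC q.1 p.1) (mC q.2 p.2).
split.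
- move=> x y z W phi Hphi; rewrite /tsum /tadd /circ /brT big_cat ?sum_op2 !sum_op.
  rewrite [X in _ = _ + X]exchange_big -big_split; apply: eq_bigr => p _.
  rewrite -big_split; apply: eq_bigr => q _.
  rewrite -big_split; apply: eq_bigr => r _ /=.
  by rewrite !sA (sC q.1 p.1) -(blD2 Hphi) jac'.
split.
- move=> x y z W phi Hphi; rewrite /tsum /tadd /circ /brT big_cat ?sum_op2 !sum_op.
  rewrite [X in _ = _ + X]exchange_big -big_split; apply: eq_bigr => p _.
  rewrite -big_split; apply: eq_bigr => q _.
  rewrite -big_split; apply: eq_bigr => r _ /=.
  by rewrite !sA (sC q.1 p.1) -(blD2 Hphi) leib.
split.
- move=> x y z W phi Hphi; rewrite /tsum /tadd /circ /brT big_cat ?sum_op2 !sum_op.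
  rewrite [X in _ = _ + X]exchange_big -big_split; apply: eq_bigr => p _.
  rewrite -big_split; apply: eq_bigr => q _.
  rewrite -big_split; apply: eq_bigr => r _ /=.
  by rewrite !sA (sC q.1 p.1) -(blD2 Hphi) leib2.
- move=> x y z W phi Hphi; rewrite tsN // /tsum /circ /brT !sum_op.
  rewrite [X in _ = - X]exchange_big -sumrN; apply: eq_bigr => p _.
  rewrite -sumrN; apply: eq_bigr => q _.
  rewrite -sumrN; apply: eq_bigr => r _ /=.
  by rewrite (sC q.1 p.1) (anti q.2 p.2) (blN1 hm) (blN2 Hphi) opprK.
Qed.
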